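(* Let $G$ be the path graph on $n$ vertices $v_1,\dots,v_n$ ($v_t$ adjacent to $v_{t+1}$ for $1\le t<n$; the linear nearest-neighbor architecture). The QFT circuit on $n$ qubits produced by the construction in the context has CNOT cost $1.5n^2-1.5n-1$.
   Context: A walk is a sequence $(u_1,\dots,u_h)$ of vertices with consecutive entries adjacent (repetitions allowed), of length $h$. Each vertex carries one physical qubit; two-qubit gates only act on qubits at adjacent vertices. Gates: Hadamard $H$; controlled phase $CR_d=\mathrm{diag}(1,1,1,e^{i\pi/2^{d-1}})$; SWAP. Construction: let $P$ be a shortest walk in $G$ visiting all vertices. Place logical qubit $r$ ($1\le r\le n$) on the $r$-th distinct vertex of $P$ in order of first occurrence; whenever a SWAP is applied the logical qubits on its two vertices exchange places. Let $R=V$. For $r=1,\dots,n$: let $P'=(u_1,\dots,u_{k'})$ be $P$ if $r=1$, and otherwise a shortest walk in the induced subgraph $G[R]$ that starts at the vertex currently holding logical qubit $r$ and visits every vertex of $R$. Cascade $r$: apply $H$ to $u_1$; $j=1$, $U=\emptyset$; while $j\le k'-1$: (i) if $u_{j+1}\notin U$, apply $CR_d$ with control $u_{j+1}$, target $u_j$, where $d$ is (index of the logical qubit on $u_{j+1}$) $-\,r$, and add $u_{j+1}$ to $U$; (ii) if $j\le k'-2$ and $u_{j+2}=u_j$, set $j\leftarrow j+2$; otherwise, if $k'\ne 2$ apply SWAP to $u_j,u_{j+1}$, and set $j\leftarrow j+1$. After cascade $r$, remove from $R$ the vertex holding logical qubit $r$. CNOT cost: number of CNOTs after decomposition, counting $H$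 as 0, each $CR_d$ as 2, each SWAP as 3, and a $CR_d$ immediately followed by a SWAP on the same two qubits as 3 in total. *)

(* Defs.v *)
From mathcomp Require Import all_boot all_order all_algebra.
Set Implicit Arguments. Unset Strict Implicit. Unset Printing Implicit Defensive.
Import GRing.Theory Num.Theory.

(* Vertices are natural numbers; a graph on vertex set V is a (symmetric)
   adjacency relation [adj]. *)

(* The path graph on n vertices v_1..v_n, encoded as 0..n-1
   (v_t is encoded as t-1); v_t ~ v_{t+1}. *)
Definition path_adj (n : nat) : rel nat :=
  fun u v => [&& u < n, v < n & (u.+1 == v) || (v.+1 == u)].

Definition cover_walk (adj : rel nat) (R : seq nat) (st : pred nat)
    (w : seq nat) : Prop :=
  [/\ w != [::], st (head 0 w), all (fun v => v \in R) w,
      path adj (head 0 w) (behead w) & {subset R <= w}].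

(* a shortest such walk (length = number of entries) *)
Definition shortest_cover (adj : rel nat) (R : seq nat) (st : pred nat)
    (w : seq nat) : Prop :=
  cover_walk adj R st w /\
  forall w', cover_walk adj R st w' -> size w <= size w'.

(* Gates: H on a vertex; CR d control target; SWAP on two vertices. *)
Inductive gate :=
| Hg of nat
| CRg of int & nat & nat
| SWAPg of nat & nat.

(* A placement [loc] gives, for each vertex, the index of the logical qubit
   it currently holds. *)
Definition swap_loc (a b : nat) (loc : nat -> nat) : nat -> nat :=
  fun v => if v == a then loc b else if v == b then loc a else loc v.

(* The while loop of cascade r, run on the suffix s = (u_j, u_{j+1}, ...)
   of the walk P'. [noswap] is (k' == 2). Returns gates and new placement. *)
Fixpoint casc_loop (fuel : nat) (noswap : bool) (r : nat) (s : seq nat)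
    (U : seq nat) (loc : nat -> nat) : seq gate * (nat -> nat) :=
  match fuel with
  | 0 => ([::], loc)
  | fuel'.+1 =>
    match s with
    | uj :: uj1 :: rest =>
      let g1 := if uj1 \notin U
                then [:: CRg ((loc uj1)%:Z - r%:Z) uj1 uj] else [::] in
      let U' := if uj1 \notin U then uj1 :: U else U in
      let swap_step :=
        let gsw := if noswap then [::] else [:: SWAPg uj uj1] in
        let loc1 := if noswap then loc else swap_loc uj uj1 loc in
        let res := casc_loop fuel' noswap r (uj1 :: rest) U' loc1 in
        (g1 ++ gsw ++ res.1, res.2) in
      match rest with
      | uj2 :: _ =>
        if uj2 == uj then
          let res := casc_loop fuel' noswap r rest U' loc in
          (g1 ++ res.1, res.2)
        else swap_step
      | [::] => swap_step
      end
    | _ => ([::], loc)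
    end
  end.

Definition cascade (r : nat) (w : seq nat) (loc : nat -> nat)
    : seq gate * (nat -> nat) :=
  let res := casc_loop (size w) (size w == 2) r w [::] loc in
  (Hg (head 0 w) :: res.1, res.2).

Fixpoint run_rest (r : nat) (ws : seq (seq nat)) (R : seq nat)
    (loc : nat -> nat) : seq gate :=
  match ws with
  | [::] => [::]
  | w :: ws' =>
    let res := cascade r w loc in
    res.1 ++ run_rest r.+1 ws' [seq v <- R | res.2 v != r] res.2
  end.

Fixpoint valid_rest (adj : rel nat) (r : nat) (ws : seq (seq nat))
    (R : seq nat) (loc : nat -> nat) : Prop :=
  match ws with
  | [::] => True
  | w :: ws' =>
    let res := cascade r w loc in
    shortest_cover adj R (fun v => loc v == r) w /\
    valid_rest adj r.+1 ws' [seq v <- R | res.2 v != r] res.2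
  end.

Definition init_loc (P : seq nat) : nat -> nat :=
  fun v => (index v (undup P)).+1.

(* c is a circuit produced by the construction on the graph (V = 0..n-1, adj),
   for some admissible choice of the shortest walks. *)
Definition qft_produces (adj : rel nat) (n : nat) (c : seq gate) : Prop :=
  exists (P : seq nat) (ws : seq (seq nat)),
    let V := iota 0 n in
    let res1 := cascade 1 P (init_loc P) in
    let R1 := [seq v <- V | res1.2 v != 1] in
    [/\ shortest_cover adj V predT P,
        size ws = n.-1,
        valid_rest adj 2 ws R1 res1.2 &
        c = res1.1 ++ run_rest 2 ws R1 res1.2].

Fixpoint cnot_cost (c : seq gate) : nat :=
  match c with
  | [::] => 0
  | g :: t =>
    match g with
    | Hg _ => cnot_cost t
    | SWAPg _ _ => 3 + cnot_cost t
    | CRg _ a b =>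
      match t with
      | SWAPg x y :: t' =>
        if ((a == x) && (b == y)) || ((a == y) && (b == x))
        then 3 + cnot_cost t' else 2 + cnot_cost t
      | _ => 2 + cnot_cost t
      end
    end
  end.

(* Main.v *)
Require Import Defs.
From mathcomp Require Import all_boot all_order all_algebra.
From mathcomp Require Import zify.
Import GRing.Theory Num.Theory.

Definition startsH (c : seq gate) : bool :=
  if c is g :: _ then (if g is Hg _ then true else false) else true.

Lemma cost_cat a b : startsH b -> cnot_cost (a ++ b) = cnot_cost a + cnot_cost b.
Proof.
move=> Hb; elim: a => [|g a IH] //=.
case: g => [x|d u v|x y] //=; try by rewrite IH.
- case: a IH => [|g' a'] /= IH.
  + by clear IH; case: b Hb => [|[]] //.
  + case: g' IH => [x|d' u' v'|x y] IH /=; try by rewrite IH.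
    case: ifP => _; last by rewrite IH.
    by move: IH => /=; lia.
Qed.

Lemma loop_lemma (fuel r : nat) (s U : seq nat) (loc : nat -> nat) :
  uniq s -> size s <= fuel -> all (fun v => v \notin U) (behead s) ->
  [/\ cnot_cost (casc_loop fuel false r s U loc).1 = 3 * (size s).-1,
      forall v, v \notin s -> (casc_loop fuel false r s U loc).2 v = loc v,
      forall i, i.+1 < size s -> (casc_loop fuel false r s U loc).2 (nth 0 s i) = loc (nth 0 s i.+1) &
      (casc_loop fuel false r s U loc).2 (last 0 s) = loc (head 0 s)].
Proof.
elim: fuel s U loc => [|fuel IH] [|x [|y rest]] U loc Hu Hs Hall; try by (simpl; split => // -[]).
have Hy : y \notin U by case/andP: Hall.
have E : casc_loop fuel.+1 false r [:: x, y & rest] U loc =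
  ([:: CRg ((loc y)%:Z - r%:Z) y x; SWAPg x y] ++
     (casc_loop fuel false r (y :: rest) (y :: U) (swap_loc x y loc)).1,
   (casc_loop fuel false r (y :: rest) (y :: U) (swap_loc x y loc)).2).
  case: rest Hu {Hs Hall} => [|z rest'] Hu /=; rewrite Hy //.
  have -> : (z == x) = false.
    by case/andP: Hu => Hu _; apply/negbTE; apply: contra Hu => /eqP ->; rewrite !inE eqxx !orbT.
  by [].
rewrite E.
case/andP: Hu => Hx Hu.
have Hall' : all (fun v => v \notin y :: U) rest.
  case/andP: Hu => Hyr _; case/andP: Hall => _ Hall.
  apply/allP => v Hv; rewrite inE negb_or (allP Hall v Hv) andbT.
  by apply: contra Hyr => /eqP <-.
have [C1 C2 C3 C4] := IH (y :: rest) (y :: U) (swap_loc x y loc) Hu Hs Hall'.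
split.
- by rewrite /= !eqxx orbT C1 /=; lia.
- move=> v; rewrite !inE negb_or => /andP [Hvx Hv].
  rewrite /= C2 // /swap_loc (negbTE Hvx).
  by move: Hv; rewrite ?inE negb_or => /andP [/negbTE -> _].
- case=> [|i] Hi /=.
  + by rewrite C2 ?inE // /swap_loc eqxx.
  + have Hi' : i.+1 < size (y :: rest) by [].
    rewrite C3 // /swap_loc.
    have Hin : nth 0 (y :: rest) i.+1 \in rest by rewrite /= mem_nth.
    have -> : (nth 0 (y :: rest) i.+1 == x) = false.
      by apply/negbTE; apply: contra Hx => /eqP <-; rewrite inE Hin orbT.
    have -> : (nth 0 (y :: rest) i.+1 == y) = false.
      by apply/negbTE; case/andP: Hu => Hyr _; apply: contra Hyr => /eqP <-.
    by [].
- by move: C4 => /= ->; rewrite /swap_loc eqxx; case: ifP => // /eqP ->.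
Qed.

Definition line (adj : rel nat) (L : seq nat) : Prop :=
  forall i j, i < j -> j < size L -> adj (nth 0 L i) (nth 0 L j) -> j = i.+1.

Lemma line_behead adj x L : line adj (x :: L) -> line adj L.
Proof. move=> H i j Hij Hj Ha; have := H i.+1 j.+1 Hij Hj Ha; lia. Qed.

Lemma walk_unique (adj : rel nat) (L w : seq nat) : uniq L -> line adj L -> uniq w ->
  path adj (head 0 w) (behead w) -> head 0 w = head 0 L ->
  all (fun v => v \in L) w -> size w = size L -> w = L.
Proof.
elim: L w => [|x L IH] w HuL HlL Huw Hp Hh Hall Hs.
  by case: w Huw Hp Hh Hall Hs.
case: w Huw Hp Hh Hall Hs => [|x' w'] //= Huw Hp Hh Hall [Hs].
subst x'.
case: L IH HuL HlL Hall Hs => [|y L] IH HuL HlL Hall Hs.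
  by case: w' Hs {Hall Hp Huw}.
case: w' Huw Hp Hall Hs => [|z w''] //= Huw Hp Hall Hs.
case/andP: Hp => Hxz Hp.
have Hz : z \in y :: L.
  case/and3P: Hall => _ Hz _; move: Hz; rewrite inE => /orP [/eqP Ezx|//].
  by move: Huw; rewrite Ezx inE eqxx.
have Ezy : z = y.
  have Hj := index_mem z (y :: L); rewrite Hz in Hj.
  have Hn := nth_index 0 Hz.
  move: Hj Hn; set k := index z (y :: L) => Hj Hn.
  have := HlL 0 k.+1 erefl Hj; rewrite /= Hn => /(_ Hxz) [] Hi.
  by rewrite -Hn Hi.
subst z.
congr (_ :: _).
apply: IH => //.
- by case/andP: HuL.
- exact: line_behead HlL.
- by case/andP: Huw.
- apply/allP => v Hv.
  have Hv' : v \in [:: x, y & L].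
    move: Hv; rewrite inE => /orP [/eqP ->|Hv]; first by rewrite !inE eqxx orbT.
    by case/and3P: Hall => _ _ /allP; apply.
  move: Hv'; rewrite inE => /orP [/eqP Evx|//].
  by case/andP: Huw; rewrite -Evx Hv.
Qed.

Definition fc m := if m == 2 then 2 else 3 * m.-1.

Lemma step_lemma (adj : rel nat) (r : nat) (L : seq nat) (loc : nat -> nat) :
  0 < size L -> uniq L -> path adj (head 0 L) (behead L) -> line adj L ->
  (forall i, i < size L -> loc (nth 0 L i) = r + i) ->
  cnot_cost (cascade r L loc).1 = fc (size L) /\ startsH (cascade r L loc).1 /\
  exists L', [/\ size L' = (size L).-1 /\ uniq L', path adj (head 0 L') (behead L'), line adj L',
     (forall i, i < size L' -> (cascade r L loc).2 (nth 0 L' i) = r.+1 + i) &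
     (forall v, (v \in L') = (v \in L) && ((cascade r L loc).2 v != r))].
Proof.
case: L => [|x [|y [|z s]]] // _ Hu Hp Hl Hloc.
- split => //; split => //; exists [::]; split => //.
  move=> v; rewrite /cascade /= !inE; case: eqP => // ->.
    by have := Hloc 0 erefl; rewrite /= addn0 => ->; rewrite eqxx.
- split => //; split => //; exists [:: y]; split => //.
  + by move=> i j Hij /= Hj; lia.
  + by case=> // _; rewrite /cascade /=; have := Hloc 1 erefl; rewrite /= => ->; lia.
  + move=> v; rewrite /cascade /= !inE.
    have Hxy : x != y by move: Hu; rewrite /= inE andbT.
    have Hx : loc x = r by have := Hloc 0 erefl; rewrite /= addn0.
    have Hy : loc y = r.+1 by have := Hloc 1 erefl; rewrite /= addn1.
    case: (eqVneq v y) => [->|Hvy]; first by rewrite Hy orbT; lia.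
    rewrite orbF; case: eqP => // ->.
    by rewrite Hx eqxx.
move EL: [:: x, y, z & s] => L in Hu Hp Hl Hloc *.
have HL3 : size L != 2 by rewrite -EL.
have [C1 C2 C3 C4] := loop_lemma (size L) r L [::] loc Hu (leqnn (size L)) (introT allP (fun v _ => erefl)).
have E : cascade r L loc = (Hg x :: (casc_loop (size L) false r L [::] loc).1,
                           (casc_loop (size L) false r L [::] loc).2) by rewrite -EL.
rewrite E; set res := casc_loop (size L) false r L [::] loc in C1 C2 C3 C4 *.
split; first by rewrite /= C1 /fc (negbTE HL3).
split => //.
have Hlr : res.2 (last x [:: y, z & s]) = r.
  have -> : last x [:: y, z & s] = last 0 L by rewrite -EL.
  rewrite C4; have := Hloc 0; rewrite -EL /= addn0; exact.
set Lp := belast x [:: y, z & s].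
have HL : L = rcons Lp (last x [:: y, z & s]) :> seq nat by rewrite -EL; exact: (lastI x [:: y, z & s]).
have HLp : size Lp = (size L).-1 by rewrite -EL size_belast.
have HLp' : (size Lp).+1 = size L by rewrite HL size_rcons.
have HLpath : path adj (head 0 Lp) (behead Lp).
  rewrite /Lp /=; move: Hp; rewrite -EL /= => /and3P [-> H1 H2] /=.
  have : path adj y (z :: s) by rewrite /= H1 H2.
  by rewrite (lastI z s) rcons_path => /andP [].
set lst := last x [:: y, z & s] in HL Hlr *.
clearbody Lp lst.
have Hnth : forall i, i < size Lp -> nth 0 Lp i = nth 0 L i.
  by move=> i Hi; rewrite HL nth_rcons Hi.
have HuL := Hu; rewrite HL rcons_uniq in HuL; case/andP: HuL => Hlst HuLp.
exists Lp; split => //.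
- move=> i j Hij Hj; have Hi : i < size Lp := ltn_trans Hij Hj.
  rewrite !Hnth //; apply: Hl => //; lia.
- move=> i Hi; rewrite /= Hnth // C3; last by rewrite -HLp'.
  by rewrite Hloc ?addSnnS // -HLp'.
- move=> v; rewrite /= [in v \in L]HL mem_rcons inE.
  case: (eqVneq v lst) => [->|Hv] /=.
  + rewrite (negbTE Hlst) /=.
    by rewrite Hlr eqxx.
  + case Hin : (v \in Lp) => //=.
    have Hi := index_mem v Lp; rewrite Hin in Hi.
    rewrite -(nth_index 0 Hin) Hnth // C3; last by rewrite -HLp'.
    rewrite Hloc; last by rewrite -HLp'.
    by apply/esym/negP => /eqP; lia.
Qed.

Fixpoint gc m := if m is m'.+1 then fc m + gc m' else 0.

Lemma run_lemma (adj : rel nat) (ws : seq (seq nat)) : forall (r : nat) (R L : seq nat) (loc : nat -> nat),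
  size ws = size L -> uniq L -> path adj (head 0 L) (behead L) -> line adj L -> R =i L ->
  (forall i, i < size L -> loc (nth 0 L i) = r + i) ->
  valid_rest adj r ws R loc ->
  cnot_cost (run_rest r ws R loc) = gc (size L) /\ startsH (run_rest r ws R loc).
Proof.
elim: ws => [|w ws IH] r R L loc Hs Hu Hp Hl HR Hloc /=.
  by case: L Hs {Hu Hp Hl HR Hloc}.
move=> [Hsh Hv].
have HL0 : 0 < size L by rewrite -Hs.
have Ew : w = L.
  case: Hsh => [[Hw0 Hst Hall Hpw Hsub] Hmin].
  have HcL : cover_walk adj R (fun v => loc v == r) L.
    split.
    + by case: L HL0 {Hs Hu Hp Hl HR Hloc Hmin Hsub}.
    + by have := Hloc 0 HL0; rewrite nth0 addn0 => ->.
    + by apply/allP => v Hv'; rewrite HR.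
    + exact: Hp.
    + by move=> v; rewrite HR.
  have Hle := Hmin L HcL.
  have HsubL : {subset L <= w} by move=> v Hv'; apply: Hsub; rewrite HR.
  have Hge := uniq_leq_size Hu HsubL.
  have Huw := leq_size_uniq Hu HsubL Hle.
  have Hhw : head 0 w \in L.
    rewrite -HR; apply: (allP Hall).
    by move: Hw0; case: (w) => // a w' _; rewrite mem_head.
  have Hhead : head 0 w = head 0 L.
    have Hi := index_mem (head 0 w) L; rewrite Hhw in Hi.
    have := Hloc _ Hi; rewrite nth_index // (eqP Hst) => E.
    have E0 : index (head 0 w) L = 0 by lia.
    by rewrite -(nth_index 0 Hhw) E0 nth0.
  apply: (walk_unique adj) => //.
  + by apply/allP => v Hv'; rewrite -HR; exact: (allP Hall).
  + by apply/eqP; rewrite eqn_leq Hle Hge.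
subst w.
have [C1 [C2 [L' [[Hs' Hu'] Hp' Hl' Hloc' Hmem]]]] := step_lemma adj r L loc HL0 Hu Hp Hl Hloc.
have Hs2 : size ws = size L' by move: Hs; rewrite Hs' /=; lia.
have HR' : [seq v <- R | (cascade r L loc).2 v != r] =i L'.
  by move=> v; rewrite mem_filter Hmem HR andbC.
have [IH1 IH2] := IH _ _ _ _ Hs2 Hu' Hp' Hl' HR' Hloc' Hv.
rewrite cost_cat //; split; last by [].
move: C1 IH1; rewrite /cascade /= => -> ->.
by rewrite Hs'; case: (size L) HL0.
Qed.

Lemma path_line n (P : seq nat) : uniq P -> path (path_adj n) (head 0 P) (behead P) ->
  line (path_adj n) P.
Proof.
move=> Hu Hp.
have Hadj : forall i, i.+1 < size P ->
    (nth 0 P i).+1 = nth 0 P i.+1 \/ (nth 0 P i.+1).+1 = nth 0 P i.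
  case: P Hu Hp => [|x p] // Hu /(pathP 0) Hp i Hi.
  by have := Hp i Hi; rewrite /path_adj => /and3P [_ _ /orP [/eqP ->|/eqP ->]]; [left|right].
have Hneq : forall i, i.+2 < size P -> nth 0 P i.+2 != nth 0 P i.
  move=> i Hi; rewrite nth_uniq //; try lia.
  exact: ltnW (ltnW Hi).
have Hmono : forall i, i.+1 < size P ->
    (nth 0 P 0 < nth 0 P 1 -> nth 0 P i.+1 = (nth 0 P i).+1) /\
    (nth 0 P 1 < nth 0 P 0 -> nth 0 P i = (nth 0 P i.+1).+1).
  elim=> [|i IH] Hi.
    by have := Hadj 0 Hi; lia.
  have [IH1 IH2] := IH (ltnW Hi).
  have := Hadj _ Hi; have := Hneq _ Hi; move=> /eqP Hne Ha.
  split=> H; [have := IH1 H | have := IH2 H]; lia.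
have Hclosed : forall i, i < size P ->
    (nth 0 P 0 < nth 0 P 1 -> nth 0 P i = nth 0 P 0 + i) /\
    (nth 0 P 1 < nth 0 P 0 -> nth 0 P i + i = nth 0 P 0).
  elim=> [|i IH] Hi; first by split=> _; rewrite addn0.
  have [IH1 IH2] := IH (ltnW Hi).
  have [M1 M2] := Hmono _ Hi.
  split=> H; [have := IH1 H; have := M1 H | have := IH2 H; have := M2 H]; lia.
move=> i j Hij Hj Ha.
have H1 : 1 < size P by lia.
have [C1 C2] := Hclosed _ (ltn_trans Hij Hj).
have [D1 D2] := Hclosed _ Hj.
move: Ha; rewrite /path_adj => /and3P [_ _ /orP [/eqP E|/eqP E]];
have := Hadj 0 H1; lia.
Qed.

Lemma iota_path n m k : m + k < n -> path (path_adj n) m (iota m.+1 k).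
Proof.
elim: k m => [|k IH] m Hk //=.
rewrite IH; last by lia.
by rewrite /path_adj eqxx orTb !andbT; apply/andP; split; lia.
Qed.

Lemma gc_val k : 2 * gc k.+2 + 2 = 3 * (k + 2) * (k + 1).
Proof.
elim: k => [|k IH] //.
have -> : gc k.+3 = 3 * k.+2 + gc k.+2 by [].
nia.
Qed.

Lemma main_nat n c : 2 <= n -> qft_produces (path_adj n) n c -> cnot_cost c = gc n.
Proof.
move=> Hn [P [ws [[HcP HminP] Hws Hvalid ->]]].
case: HcP => HP0 _ HPall HPp HPsub.
have Hiota : cover_walk (path_adj n) (iota 0 n) predT (iota 0 n).
  split => //.
  - by case: (n) Hn.
  - have -> : iota 0 n = 0 :: iota 1 n.-1 by case: (n) Hn.
    by apply: iota_path; rewrite add0n ltn_predL; lia.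
have Hle := HminP _ Hiota; rewrite size_iota in Hle.
have Hsub : {subset iota 0 n <= P} := HPsub.
have Hge := uniq_leq_size (iota_uniq 0 n) Hsub; rewrite size_iota in Hge.
have HuP : uniq P.
  by apply: (leq_size_uniq (iota_uniq 0 n) Hsub); rewrite size_iota.
have HsP : size P = n by apply/eqP; rewrite eqn_leq Hle Hge.
have HlP := path_line n P HuP HPp.
have HlocP : forall i, i < size P -> init_loc P (nth 0 P i) = 1 + i.
  by move=> i Hi; rewrite /init_loc undup_id // index_uniq.
have HP0' : 0 < size P by lia.
have [C1 [C2 [L' [[Hs' Hu'] Hp' Hl' Hloc' Hmem]]]] := step_lemma (path_adj n) 1 P (init_loc P) HP0' HuP HPp HlP HlocP.
have Hs2 : size ws = size L' by rewrite Hs' Hws HsP.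
have HR' : [seq v <- iota 0 n | (cascade 1 P (init_loc P)).2 v != 1] =i L'.
  move=> v; rewrite mem_filter Hmem andbC; congr (_ && _).
  apply/idP/idP => [/Hsub //|Hv]; move/allP: HPall => /(_ v Hv) //.
have [IH1 IH2] := run_lemma (path_adj n) ws 2 _ _ _ Hs2 Hu' Hp' Hl' HR' Hloc' Hvalid.
rewrite cost_cat // C1 IH1 Hs' HsP.
by case: (n) Hn.
Qed.

Local Open Scope ring_scope.
From mathcomp Require Import ring lra.

Theorem lemma6 (n : nat) (c : seq gate) :
  (2 <= n)%N -> qft_produces (path_adj n) n c ->
  (cnot_cost c)%:R = (3%:R / 2%:R) * (n%:R) ^+ 2 - (3%:R / 2%:R) * n%:R - 1 :> rat.
Proof.
move=> Hn Hq; rewrite (main_nat n c Hn Hq).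
case: n Hn {Hq} => [|[|k]] // _.
have H := gc_val k.
move: H; set g := gc k.+2 => H; clearbody g.
have H' : (2 * g + 2)%:R = (3 * (k + 2) * (k + 1))%:R :> rat by rewrite H.
have E2 : (k.+2)%:R = k%:R + 2 :> rat by rewrite -[k.+2]addn2 natrD.
have E1 : (k + 1)%:R = k%:R + 1 :> rat by rewrite natrD.
have E2' : (k + 2)%:R = k%:R + 2 :> rat by rewrite natrD.
have Eg : (g%:R : rat) = ((2 * g + 2)%:R - 2) / 2.
  by rewrite natrD natrM; field.
rewrite Eg H' !natrM E2 E1 E2'.
by field.
Qed.
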